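(* Let $d\ge1$ and let $X$ be $\mathbb{R}^d$ equipped with a norm $\|\cdot\|$ such that $X$ is uniformly smooth, i.e. its modulus of smoothness $$\rho(u):=\sup_{\|x\|=\|y\|=1}\Big(\tfrac12(\|x+uy\|+\|x-uy\|)-1\Big)$$ satisfies $\lim_{u\to0}\rho(u)/u=0$. Let $B=\{x:\|x\|\le1\}$, $B^o(x)=\{y:\|y-x\|<1\}$, and let $\{e^j\}_{j=1}^d$ be the standard basis of $\mathbb{R}^d$. For $a>0$ define $x^j:=ae^j$, $j=1,\dots,d$, and $x^{d+1}:=-a\sum_{j=1}^de^j$. Then there exists $a>0$ such that $$B\subset\bigcup_{j=1}^{d+1}B^o(x^j).$$ *)

(* Defs.v *)
From HB Require Import structures.
From mathcomp Require Import all_boot all_order all_algebra.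
From mathcomp Require Import all_classical all_reals all_analysis.
Set Implicit Arguments. Unset Strict Implicit. Unset Printing Implicit Defensive.
Import Order.TTheory GRing.Theory Num.Theory.
Import numFieldNormedType.Exports.
Local Open Scope ring_scope.
Local Open Scope classical_set_scope.

Definition is_norm (R : realType) (d : nat) (N : 'rV[R]_d -> R) : Prop :=
  [/\ (forall x, 0 <= N x),
      (forall x, N x = 0 -> x = 0),
      (forall (c : R) x, N (c *: x) = `|c| * N x) &
      (forall x y, N (x + y) <= N x + N y)].

Definition modulus_smoothness (R : realType) (d : nat) (N : 'rV[R]_d -> R)
  (u : R) : R :=
  sup [set t | exists x y : 'rV[R]_d, N x = 1 /\ N y = 1 /\
               t = (N (x + u *: y) + N (x - u *: y)) / 2 - 1].

Definition uniformly_smooth (R : realType) (d : nat) (N : 'rV[R]_d -> R) : Prop :=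
  modulus_smoothness N u / u @[u --> 0^'] --> (0 : R).

Definition std_basis (R : realType) (d : nat) (j : 'I_d) : 'rV[R]_d :=
  \row_(k < d) (k == j)%:R.

(* Main.v *)
Require Import Defs.
From HB Require Import structures.
From mathcomp Require Import all_boot all_order all_algebra.
From mathcomp Require Import all_classical all_reals all_analysis.
From mathcomp Require Import ring lra.
Import Order.TTheory GRing.Theory Num.Theory.
Import numFieldNormedType.Exports.
Local Open Scope ring_scope.

Section S.
Variables (R : realType) (d : nat) (N : 'rV[R]_d -> R) (hN : is_norm N).

Lemma N0 : N 0 = 0.
Proof. case: hN => _ _ hZ _. by rewrite -(scale0r 0) hZ normr0 mul0r. Qed.
Lemma Nge0 x : 0 <= N x. Proof. by case: hN. Qed.
Lemma NZ c x : N (c *: x) = `|c| * N x. Proof. by case: hN. Qed.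
Lemma ND x y : N (x + y) <= N x + N y. Proof. by case: hN. Qed.
Lemma NN x : N (- x) = N x.
Proof. by rewrite -scaleN1r NZ normrN normr1 mul1r. Qed.
Lemma Neq0 x : N x = 0 -> x = 0. Proof. by case: hN => _ H _ _; exact: H. Qed.

Lemma Nsum n (F : 'I_n -> 'rV[R]_d) : N (\sum_(i < n) F i) <= \sum_(i < n) N (F i).
Proof.
apply: (big_ind2 (fun y1 y2 => N y1 <= y2)) => //; first by rewrite N0.
by move=> x1 x2 y1 y2 h1 h2; apply: le_trans (ND _ _) _; exact: lerD.
Qed.

Lemma coord_le (x : 'rV[R]_d) k : `|x ord0 k| <= `|x|.
Proof.
have -> : `|x| = mx_norm x by [].
rewrite mx_normrE; apply/bigmax_geP; right => /=.
by exists (ord0, k).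
Qed.

Lemma basis_decomp (x : 'rV[R]_d) : x = \sum_(k < d) x ord0 k *: std_basis R k.
Proof.
apply/rowP => i; rewrite summxE (bigD1 i) //= big1 => [|k /negPf ki].
  by rewrite !mxE eqxx mulr1 addr0.
by rewrite !mxE eq_sym ki mulr0.
Qed.


Let K := \sum_(k < d) N (std_basis R k).

Lemma NleK x : N x <= `|x| * K.
Proof.
rewrite {1}(basis_decomp x) /K mulr_sumr.
apply: le_trans (Nsum _ _) _; apply: ler_sum => k _; rewrite NZ.
by apply: ler_wpM2r; [exact: Nge0 | exact: coord_le].
Qed.

Lemma Ncont : continuous N.
Proof.
move=> x; apply/(@cvgrPdist_lt _ _ _ (nbhs x)) => e e0.
have K1 : 0 < K + 1.
  by rewrite ltr_wpDl // sumr_ge0 // => k _; exact: Nge0.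
near=> y.
have hy : `|x - y| < e / (K + 1).
  near: y; exact: (@cvgr_dist_lt _ _ _ (nbhs x) _ id x cvg_id _ (divr_gt0 e0 K1)).
have H1 : N (x - y) < e.
  apply: le_lt_trans (NleK _) _.
  rewrite -(ltr_pM2r K1) in hy; rewrite divfK ?gt_eqF // in hy.
  apply: le_lt_trans hy; rewrite ler_wpM2l // lerDl //.
apply: le_lt_trans H1.
have a1 : N x <= N y + N (x - y).
  by have := ND y (x - y); rewrite [y + _]addrC subrK.
have a2 : N y <= N x + N (x - y).
  by have := ND x (y - x); rewrite subrKC -[y - x]opprB NN.
rewrite ler_norml; apply/andP; split; lra.
Unshelve. all: by end_near.
Qed.


Lemma Nequiv : (0 < d)%N -> exists2 c : R, 0 < c & forall x, c * `|x| <= N x.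
Proof.
move=> hd.
pose A := [set x : 'rV[R]_d | `|x| = 1]%classic.
have A0 : (A !=set0)%classic.
  pose e := std_basis R (Ordinal hd).
  have e0 : e != 0.
    apply/eqP => /rowP /(_ (Ordinal hd)); rewrite !mxE eqxx => /eqP.
    by rewrite oner_eq0.
  exists (`|e|^-1 *: e); rewrite /A /= normrZ normfV normr_id mulVf //.
  by rewrite normr_eq0.
have cA : compact A.
  apply: bounded_closed_compact.
    exists 1; split => // M M1 x /= ->; exact: ltW.
  apply: (@preimage_closed _ _ (@Num.Def.normr R 'rV[R]_d) [set 1]%classic).
    by move=> z _; exact: norm_continuous.
  exact: closed_eq.
have [u uA umin] := EVT_min_rV A0 cA (continuous_subspaceT Ncont).
move: uA; rewrite inE /A /= => u1.
have Nu : 0 < N u.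
  rewrite lt0r Nge0 andbT; apply/eqP => /Neq0 u0.
  by move: u1; rewrite u0 normr0 => /eqP; rewrite eq_sym oner_eq0.
exists (N u) => // x.
have [->|x0] := eqVneq x 0; first by rewrite normr0 mulr0 Nge0.
have nx : 0 < `|x| by rewrite normr_gt0.
have := umin (`|x|^-1 *: x).
rewrite inE /A /= normrZ normfV normr_id mulVf ?gt_eqF // => /(_ erefl).
rewrite NZ normfV normr_id => h.
by rewrite mulrC -ler_pdivlMl // mulrC.
Qed.


Lemma rho_bound y w : N y = 1 -> 0 < N w ->
  N (y + w) + N (y - w) <= 2 + 2 * modulus_smoothness N (N w).
Proof.
move=> y1 w0; set u := N w.
pose z := u^-1 *: w.
have z1 : N z = 1 by rewrite NZ normfV gtr0_norm // mulVf // gt_eqF.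
have uz : u *: z = w by rewrite scalerA mulfV ?gt_eqF // scale1r.
pose S := [set t | exists x y : 'rV[R]_d, N x = 1 /\ N y = 1 /\
               t = (N (x + u *: y) + N (x - u *: y)) / 2 - 1]%classic.
have -> : modulus_smoothness N u = sup S by [].
have Sin : S ((N (y + u *: z) + N (y - u *: z)) / 2 - 1) by exists y, z.
have hS : has_sup S.
  split; first by exists ((N (y + u *: z) + N (y - u *: z)) / 2 - 1).
  exists `|u| => t [x [v [x1 [v1 ->]]]].
  have h1 : N (x + u *: v) <= 1 + `|u| by apply: le_trans (ND _ _) _; rewrite x1 NZ v1 mulr1.
  have h2 : N (x - u *: v) <= 1 + `|u| by apply: le_trans (ND _ _) _; rewrite x1 NN NZ v1 mulr1.
  lra.
have := sup_upper_bound hS Sin; rewrite uz; lra.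
Qed.


Lemma smooth_eps : uniformly_smooth N -> forall eps : R, 0 < eps ->
  exists2 del : R, 0 < del & forall u, 0 < u -> u < del ->
    modulus_smoothness N u < eps * u.
Proof.
move=> hs eps e0.
have := @cvgr_dist_lt _ R^o _ (0^')%classic ltac:(exact: _) (fun u => modulus_smoothness N u / u) 0 hs _ e0.
move=> /nbhs_ballP [del del0 hd]; exists del => // u u0 ud.
have : ball (0:R) del u by rewrite /ball /= sub0r normrN gtr0_norm.
move=> /hd /(_ (lt0r_neq0 u0)) /=.
rewrite sub0r normrN => h.
have := le_lt_trans (ler_norm _) h.
by rewrite ltr_pdivrMr.
Qed.


Lemma zid (V : zmodType) (y p q A W : V) : y + (A + W) = y - (p + q) + (p + A + (q + W)).
Proof.
rewrite opprD -!addrA; congr (_ + _).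
by rewrite [in RHS](addrCA (-q)) addKr addrCA addKr.
Qed.

Lemma comb (y : 'rV[R]_d) (mu : 'I_d -> R) (mu' : R) (w : 'I_d -> 'rV[R]_d)
  (w' : 'rV[R]_d) (be : R) :
  N y = 1 -> (forall k, 0 <= mu k) -> 0 <= mu' -> \sum_k mu k + mu' <= 1 ->
  0 <= be -> (forall k, N (y + w k) <= 1 + be) -> N (y + w') <= 1 + be ->
  N (y + (\sum_k mu k *: w k + mu' *: w')) <= 1 + be.
Proof.
move=> y1 mu0 mu'0 hM be0 hw hw'.
set M := \sum_k mu k + mu'.
have -> : y + (\sum_k mu k *: w k + mu' *: w') =
   (1 - M) *: y + (\sum_k mu k *: (y + w k) + mu' *: (y + w')).
  have -> : \sum_k mu k *: (y + w k) = (\sum_k mu k) *: y + \sum_k mu k *: w k.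
    by rewrite scaler_suml -big_split; apply: eq_bigr => k _; rewrite scalerDr.
  by rewrite /M scalerBl scale1r !scalerDl scalerDr; apply: zid.
apply: le_trans (ND _ _) _.
rewrite NZ y1 mulr1 ger0_norm ?subr_ge0 //.
have h2 : N (\sum_k mu k *: (y + w k) + mu' *: (y + w')) <= M * (1 + be).
  apply: le_trans (ND _ _) _; rewrite /M mulrDl.
  apply: lerD; last by rewrite NZ ger0_norm // ler_wpM2l.
  apply: le_trans (Nsum _ _) _; rewrite mulr_suml; apply: ler_sum => k _.
  by rewrite NZ ger0_norm // ler_wpM2l.
have M0 : 0 <= M by rewrite /M addr_ge0 // sumr_ge0.
have : M * be <= be by rewrite ler_piMl.
nra.
Qed.


Lemma main_sec (hd : (0 < d)%N) (hs : uniformly_smooth N) :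
  exists a : R, 0 < a /\
    forall x : 'rV[R]_d, N x <= 1 ->
      (exists j : 'I_d, N (x - a *: std_basis R j) < 1) \/
      N (x - (- a *: \sum_(j < d) std_basis R j)) < 1.
Proof.
have [c c0 hc] := Nequiv hd.
set S := \sum_(j < d) std_basis R j.
have K0 : 0 <= K by rewrite sumr_ge0 // => k _; exact: Nge0.
have Nek k : N (std_basis R k) <= K.
  by rewrite /K (bigD1 k) //= lerDl sumr_ge0 // => i _; exact: Nge0.
pose L := N S + K + 1.
have NS0 := Nge0 S.
have L0 : 0 < L by rewrite /L; lra.
have NeL k : N (std_basis R k) <= L by have := Nek k; rewrite /L; lra.
have NSL : N S <= L by rewrite /L; lra.
pose sig := c / (2 * d%:R + 1).
have d0 : 0 <= d%:R :> R by rewrite ler0n.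
have D0 : 0 < 2 * d%:R + 1 :> R by lra.
have sig0 : 0 < sig by rewrite divr_gt0.
pose eps := sig / (4 * L).
have eps0 : 0 < eps by rewrite divr_gt0 // mulr_gt0.
have [del del0 hdel] := smooth_eps hs _ eps0.
pose m := del / (del + 1).
have del1 : 0 < del + 1 by lra.
have m0 : 0 < m by rewrite divr_gt0.
have m1 : m < 1 by rewrite ltr_pdivrMr // mul1r; lra.
have mdel : m <= del by rewrite ler_pdivrMr //; nra.
pose a := m / (2 * L).
have a0 : 0 < a by rewrite divr_gt0 // mulr_gt0.
have aL : a * L = m / 2 by rewrite /a; field; rewrite gt_eqF.
have aLdel : a * L < del by rewrite aL; lra.
have aL1 : a * L < 1 by rewrite aL; lra.
pose be := 2 * (eps * (a * L)).
have beE : be = sig * a / 2 by rewrite /be /eps; field; rewrite gt_eqF.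
have be0 : 0 <= be by rewrite beE; apply: divr_ge0 => //; apply: mulr_ge0; lra.
have B y w : N y = 1 -> N w <= a * L -> 1 <= N (y - w) -> N (y + w) <= 1 + be.
  move=> y1 wL h.
  have [w0|wn0] := eqVneq (N w) 0.
    by rewrite (Neq0 _ w0) addr0 y1 lerDl.
  have wp : 0 < N w by rewrite lt0r wn0 Nge0.
  have r1 := rho_bound _ _ y1 wp.
  have r2 := hdel (N w) wp (le_lt_trans wL aLdel).
  have r3 : eps * N w <= eps * (a * L) by rewrite ler_wpM2l // ltW.
  rewrite /be; lra.
have unit y : N y = 1 -> (exists j, N (y - a *: std_basis R j) < 1) \/
      N (y - (- a *: S)) < 1.
  move=> y1.
  have [|H1] := pselect (exists j, N (y - a *: std_basis R j) < 1); first by left.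
  right; rewrite ltNge; apply/negP => H2.
  have H1' j : 1 <= N (y - a *: std_basis R j).
    by rewrite leNgt; apply/negP => h; apply: H1; exists j.
  set t := `|y|.
  have ct : c * t <= 1 by rewrite -y1; exact: hc.
  have t0 : 0 <= t by exact: normr_ge0.
  pose lam k := y ord0 k + t.
  have lam0 k : 0 <= lam k.
    by have := coord_le y k; rewrite ler_norml /lam -/t; lra.
  have sumlam : \sum_k lam k + t <= (2 * d%:R + 1) * t.
    have : \sum_k lam k <= \sum_(k < d) (2 * t).
      by apply: ler_sum => k _; have := coord_le y k; rewrite ler_norml /lam -/t; lra.
    rewrite sumr_const card_ord -mulr_natr; lra.
  have hcomb := @comb y (fun k => sig * lam k) (sig * t)
     (fun k => a *: std_basis R k) (- a *: S) be y1.
  have eqv : \sum_k (sig * lam k) *: (a *: std_basis R k) + (sig * t) *: (- a *: S)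
             = (sig * a) *: y.
    have -> : \sum_k (sig * lam k) *: (a *: std_basis R k) =
              (sig * a) *: \sum_k lam k *: std_basis R k.
      rewrite scaler_sumr; apply: eq_bigr => k _; rewrite !scalerA; congr (_ *: _).
      by rewrite mulrAC.
    have -> : \sum_k lam k *: std_basis R k = y + t *: S.
      rewrite /lam; under eq_bigr do rewrite scalerDl.
      by rewrite big_split /= -basis_decomp scaler_sumr.
    rewrite scalerDr !scalerA -addrA -scalerDl.
    have -> : sig * a * t + sig * t * - a = 0 by ring.
    by rewrite scale0r addr0.
  have : N (y + (sig * a) *: y) <= 1 + be.
    rewrite -eqv; apply: hcomb.
    - by move=> k; rewrite mulr_ge0 // ltW.
    - by rewrite mulr_ge0 // ltW.
    - rewrite -mulr_sumr -mulrDr.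
      have : sig * (\sum_k lam k + t) <= sig * ((2 * d%:R + 1) * t).
        by rewrite ler_wpM2l // ltW.
      suff : sig * ((2 * d%:R + 1) * t) = c * t by lra.
      by rewrite /sig; field; rewrite gt_eqF.
    - exact: be0.
    - move=> k; apply: B => //; rewrite NZ gtr0_norm //. apply: ler_wpM2l; [exact: ltW | exact: NeL].
    - apply: B => //; rewrite NZ normrN gtr0_norm //; apply: ler_wpM2l; [exact: ltW | exact: NSL].
  have -> : y + (sig * a) *: y = (1 + sig * a) *: y by rewrite scalerDl scale1r.
  rewrite NZ y1 mulr1 ger0_norm; last by have := mulr_gt0 sig0 a0; lra.
  rewrite beE; have := mulr_gt0 sig0 a0; lra.
exists a; split => // x x1.
have Nw1 w : N w <= a * L -> N w < 1 by move=> h; lra.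
have [x0|xn0] := eqVneq x 0.
  left; exists (Ordinal hd); rewrite x0 sub0r NN NZ gtr0_norm //.
  apply: le_lt_trans aL1; apply: ler_wpM2l; [exact: ltW | exact: NeL].
have nx : 0 < N x by rewrite lt0r Nge0 andbT; apply/eqP => /Neq0; exact/eqP.
pose y := (N x)^-1 *: x.
have y1 : N y = 1 by rewrite NZ normfV gtr0_norm // mulVf // gt_eqF.
have hy : N x *: y = x by rewrite scalerA mulfV ?gt_eqF // scale1r.
have ext w : N (y - w) < 1 -> N w < 1 -> N (x - w) < 1.
  move=> h1 h2.
  have -> : x - w = N x *: (y - w) - (1 - N x) *: w.
    by rewrite scalerBr scalerBl scale1r hy opprB addrA subrK.
  apply: le_lt_trans (ND _ _) _; rewrite NN !NZ gtr0_norm // ger0_norm ?subr_ge0 //.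
  have : N x * N (y - w) < N x * 1 by rewrite ltr_pM2l.
  have : (1 - N x) * N w <= (1 - N x) * 1 by rewrite ler_wpM2l ?subr_ge0 // ltW.
  lra.
case: (unit y y1) => [[j hj]|hS].
  left; exists j; apply: ext => //; apply: Nw1; rewrite NZ gtr0_norm //.
  apply: ler_wpM2l; [exact: ltW | exact: NeL].
right; apply: ext => //; apply: Nw1; rewrite NZ normrN gtr0_norm //.
apply: ler_wpM2l; [exact: ltW | exact: NSL].
Qed.

End S.

Theorem proposition3p3 (R : realType) (d : nat) (hd : (0 < d)%N)
  (N : 'rV[R]_d -> R) (hN : is_norm N) (hsmooth : uniformly_smooth N) :
  exists a : R, 0 < a /\
    forall x : 'rV[R]_d, N x <= 1 ->
      (exists j : 'I_d, N (x - a *: std_basis R j) < 1) \/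
      N (x - (- a *: \sum_(j < d) std_basis R j)) < 1.
Proof. exact: main_sec. Qed.
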